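(* Let $H$ be a graph with minimum degree $\delta(H)>|V(H)|/2$. Then for every graph $G$, \[ \kappa'(G\times H)=\min\{\,2\kappa'(G)\,e(H),\ \delta(G)\delta(H)\,\}. \]
   Context: All graphs are finite, simple and undirected. $\kappa'(G)$ denotes the edge connectivity of $G$, the minimum number of edges whose removal disconnects $G$; it is $0$ if $G$ is disconnected or has only one vertex. $\delta(\cdot)$ denotes minimum degree and $e(H)=|E(H)|$. The direct product $G\times H$ has vertex set $V(G)\times V(H)$. Two vertices $(x,u),(y,v)$ are adjacent if and only if $xy\in E(G)$ and $uv\in E(H)$. *)

(* Defs.v *)
From mathcomp Require Import all_boot.
Set Implicit Arguments. Unset Strict Implicit. Unset Printing Implicit Defensive.

Record sgraph := SGraph {
  svert :> finType;
  sadj : rel svert;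
  sadj_sym : symmetric sadj;
  sadj_irr : irreflexive sadj }.

Definition edges (G : sgraph) : {set {set G}} :=
  [set E : {set G} | [exists x, exists y, sadj x y && (E == [set x; y])]].

Definition nedges (G : sgraph) : nat := #|edges G|.

Definition deg (G : sgraph) (x : G) : nat := #|[set y | sadj x y]|.

(* minimum degree; graphs considered are nonempty where it matters (0 for empty) *)
Definition mindeg (G : sgraph) : nat :=
  if [pick x : G] is Some x0 then \big[minn/deg x0]_(x : G) deg x else 0.

Definition del_adj (G : sgraph) (F : {set {set G}}) : rel G :=
  fun x y => sadj x y && ([set x; y] \notin F).

Definition connectedb (V : finType) (r : rel V) : bool :=
  [forall x, forall y, connect r x y].

(* edge connectivity: 0 if |V| <= 1 or disconnected, otherwise the minimum
   number of edges whose removal disconnects G *)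
Definition edge_conn (G : sgraph) : nat :=
  if #|G| <= 1 then 0 else
  \big[minn/nedges G]_(F : {set {set G}} |
       (F \subset edges G) && ~~ connectedb (del_adj F)) #|F|.

Definition dprod_adj (G H : sgraph) : rel (G * H)%type :=
  fun p q => sadj p.1 q.1 && sadj p.2 q.2.

Lemma dprod_adj_sym (G H : sgraph) : symmetric (@dprod_adj G H).
Proof. by move=> [a b] [c d]; rewrite /dprod_adj /= (sadj_sym a) (sadj_sym b). Qed.

Lemma dprod_adj_irr (G H : sgraph) : irreflexive (@dprod_adj G H).
Proof. by move=> [a b]; rewrite /dprod_adj /= sadj_irr. Qed.

Definition dprod_graph (G H : sgraph) : sgraph :=
  @SGraph (G * H)%type (@dprod_adj G H) (@dprod_adj_sym G H) (@dprod_adj_irr G H).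

(* Main.v *)
Require Import Defs.
From mathcomp Require Import all_boot.
From Stdlib Require Import Lia PeanoNat.
Set Implicit Arguments. Unset Strict Implicit. Unset Printing Implicit Defensive.

Ltac uf := try unfold addn in *; try unfold muln in *.
Lemma ar0 (d p q a b : nat) : (1 <= p)%coq_nat -> (1 <= q)%coq_nat -> (p < d)%coq_nat -> (q < d)%coq_nat ->
  (p*d + q*d <= 2*p*q + a + b)%coq_nat -> (d <= a + b)%coq_nat.
Proof. unfold addn, muln; intros; unfold addn, muln in *. destruct (Nat.le_gt_cases p q).
 - assert (S q <= d)%coq_nat by lia. nia.
 - nia. Qed.
Lemma ar1 (d p q p' q' a b : nat) : (p + p' < 2*d)%coq_nat -> p+p' = q+q' -> (d <= q)%coq_nat -> (d <= p')%coq_nat -> (p < d)%coq_nat -> (q' < d)%coq_nat ->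
  (p*d + q*d + p'*d + q'*d <= 2*p*q + 2*p'*q' + 2*a + 2*b)%coq_nat -> (d <= a + b)%coq_nat.
Proof. unfold addn, muln; intros; unfold addn, muln in *. nia. Qed.
Lemma arc (d p q p' q' a b : nat) : (p + p' < 2*d)%coq_nat -> p+p' = q+q' -> (1 <= p)%coq_nat -> (1 <= p')%coq_nat ->
  (p*d <= p*q+a)%coq_nat -> (q*d <= q*p+b)%coq_nat -> (p'*d <= p'*q'+b)%coq_nat -> (q'*d <= q'*p'+a)%coq_nat -> (d <= a+b)%coq_nat.
Proof. unfold addn, muln; intros; unfold addn, muln in *.
 destruct (Nat.le_gt_cases d (a+b)) as [|Hc]; [assumption|exfalso]; uf.
 assert (1 <= q)%coq_nat by (destruct q; uf; [nia|lia]).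
 assert (1 <= q')%coq_nat by (destruct q'; uf; [nia|lia]).
 destruct (Nat.le_gt_cases d p); destruct (Nat.le_gt_cases d q);
 destruct (Nat.le_gt_cases d p'); destruct (Nat.le_gt_cases d q'); uf; try lia.
 all: first [ pose proof (@ar0 d p' q' a b); uf; lia | pose proof (@ar1 d p' q' p q a b); uf; lia | pose proof (@ar1 d p q p' q' a b); uf; lia | pose proof (@ar0 d p q a b); uf; lia].
Qed.

Lemma arith (d p q p' q' a b : nat) : p + p' < 2*d -> p+p' = q+q' -> 1 <= p -> 1 <= p' ->
  p*d <= p*q+a -> q*d <= q*p+b -> p'*d <= p'*q'+b -> q'*d <= q'*p'+a -> d <= a+b.
Proof.
move=> /ltP h1 h2 /leP h3 /leP h4 /leP h5 /leP h6 /leP h7 /leP h8; apply/leP.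
exact: (arc h1 h2 h3 h4 h5 h6 h7 h8).
Qed.

Lemma notT (T : finType) (Z : {set T}) : Z != setT -> exists b, b \notin Z.
Proof.
move=> h; case: (boolP [exists b, b \notin Z]) => [/existsP[b hb]|/existsPn hb]; first by exists b.
have ZT : Z = setT by apply/setP => b; rewrite inE; have := hb b; rewrite negbK.
by rewrite ZT eqxx in h.
Qed.

Lemma card_sum (T : finType) (A : {set T}) : #|A| = \sum_x (x \in A).
Proof. by rewrite -sum1_card big_mkcond; apply: eq_bigr => x _; case: (x \in A). Qed.

Lemma card_predE (T : finType) (P : pred T) : #|[set x | P x]| = \sum_x P x.
Proof. by rewrite card_sum; apply: eq_bigr => x _; rewrite inE. Qed.

Lemma sum_pair (I J : finType) (F : I * J -> nat) : \sum_p F p = \sum_i \sum_j F (i, j).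
Proof. by rewrite pair_bigA; apply: eq_bigr => [[]]. Qed.

Lemma bigmin_le_seq (I : eqType) (s : seq I) (P : pred I) (F : I -> nat) x0 j :
  j \in s -> P j -> \big[minn/x0]_(i <- s | P i) F i <= F j.
Proof.
elim: s => // a s IH; rewrite inE big_cons => /orP[/eqP<-|js] Pj.
  by rewrite Pj geq_minl.
case: (P a); last exact: IH.
exact: leq_trans (geq_minr _ _) (IH js Pj).
Qed.

Lemma bigmin_le (I : finType) (P : pred I) (F : I -> nat) x0 j :
  P j -> \big[minn/x0]_(i | P i) F i <= F j.
Proof. exact: bigmin_le_seq (mem_index_enum j). Qed.

Lemma bigmin_ge (I : finType) (P : pred I) (F : I -> nat) x0 m :
  m <= x0 -> (forall i, P i -> m <= F i) -> m <= \big[minn/x0]_(i | P i) F i.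
Proof. move=> h0 h; elim/big_rec: _ => // i y Pi hy; by rewrite leq_min h. Qed.

Lemma bigmin_ex (I : finType) (P : pred I) (F : I -> nat) x0 :
  \big[minn/x0]_(i | P i) F i = x0 \/ exists2 j, P j & \big[minn/x0]_(i | P i) F i = F j.
Proof.
elim/big_rec: _ => [|i y Pi [->|[j Pj ->]]]; first by left.
- by case: (leqP (F i) x0) => h; [right; exists i|left].
- by case: (leqP (F i) (F j)) => h; right; [exists i|exists j].
Qed.

Section Gen.
Variable K : sgraph.

Definition cut (Z : {set K}) : nat :=
  \sum_(a : K) \sum_(b : K) (sadj a b && (a \in Z) && (b \notin Z)).
Definition obd (Z : {set K}) : {set K * K} :=
  [set p | sadj p.1 p.2 && (p.1 \in Z) && (p.2 \notin Z)].
Definition bdry (Z : {set K}) : {set {set K}} := [set [set p.1; p.2] | p in obd Z].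

Lemma card_obd Z : #|obd Z| = cut Z.
Proof. by rewrite card_predE /cut pair_bigA. Qed.

Lemma obd_inj Z : {in obd Z &, injective (fun p : K * K => [set p.1; p.2])}.
Proof.
move=> [a b] [c d]; rewrite !inE /= => /andP[/andP[_ aZ] bZ] /andP[/andP[_ cZ] dZ] E.
have : a \in [set c; d] by rewrite -E set21.
rewrite !inE => /orP[/eqP ac|/eqP ad]; last by rewrite ad (negbTE dZ) in aZ.
have : b \in [set c; d] by rewrite -E set22.
rewrite !inE => /orP[/eqP bc|/eqP bd]; first by rewrite bc cZ in bZ.
by rewrite ac bd.
Qed.

Lemma card_bdry Z : #|bdry Z| = cut Z.
Proof. by rewrite card_in_imset ?card_obd //; apply: obd_inj. Qed.

Lemma bdry_sub Z : bdry Z \subset edges K.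
Proof.
apply/subsetP => e /imsetP[[a b] /=]; rewrite inE /= => /andP[/andP[ab _] _] ->.
by rewrite inE; apply/existsP; exists a; apply/existsP; exists b; rewrite ab eqxx.
Qed.

Lemma card1gt (Z : {set K}) : Z != set0 -> Z != setT -> 1 < #|K|.
Proof.
case/set0Pn => a aZ /notT [b bZ]; apply/card_gt1P; exists a, b; split => //.
by apply/eqP => ab; rewrite -ab aZ in bZ.
Qed.

Lemma ec_ub Z : Z != set0 -> Z != setT -> edge_conn K <= cut Z.
Proof.
move=> Z0 ZT; rewrite /edge_conn ifN -?ltnNge ?(card1gt Z0 ZT) // -card_bdry.
apply: bigmin_le; rewrite bdry_sub /=.
case/set0Pn: Z0 => a aZ; case/notT: ZT => b bZ.
apply/negP => /forallP /(_ a) /forallP /(_ b) C.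
suff cl : closed (del_adj (bdry Z)) Z.
  by have := closed_connect cl C; rewrite aZ (negbTE bZ).
move=> x y /andP[xy nb].
case xZ: (x \in Z); case yZ: (y \in Z) => //; case/negP: nb.
  by apply/imsetP; exists (x, y); rewrite // inE /= xy xZ yZ.
apply/imsetP; exists (y, x); last by rewrite /= setUC.
by rewrite inE /= sadj_sym xy xZ yZ.
Qed.

Lemma ec_lb m : 1 < #|K| -> (forall Z, Z != set0 -> Z != setT -> m <= cut Z) ->
  m <= edge_conn K.
Proof.
move=> K2 h; rewrite /edge_conn ifN -?ltnNge //; apply: bigmin_ge.
  case/card_gt1P: K2 => a [b [_ _ ab]].
  have Z0 : [set a] != set0 by apply/set0Pn; exists a; rewrite inE.
  have ZT : [set a] != setT by apply/eqP => /setP /(_ b); rewrite !inE eq_sym (negbTE ab).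
  apply: leq_trans (h _ Z0 ZT) _; rewrite -card_bdry; exact: subset_leq_card (bdry_sub _).
move=> F /andP[Fsub /forallPn [x /forallPn [y nc]]].
set Z := [set z | connect (del_adj F) x z].
have xZ : x \in Z by rewrite inE connect0.
have yZ : y \notin Z by rewrite inE.
have Z0 : Z != set0 by apply/set0Pn; exists x.
have ZT : Z != setT by apply/eqP => ZT; rewrite ZT inE in yZ.
apply: leq_trans (h _ Z0 ZT) _; rewrite -card_bdry; apply: subset_leq_card.
apply/subsetP => e /imsetP[[a b] /=]; rewrite inE /= => /andP[/andP[ab aZ] bZ] ->.
apply/negPn/negP => nF; case/negP: bZ; move: aZ; rewrite !inE => aZ.
by apply: connect_trans aZ (connect1 _); rewrite /del_adj ab nF.
Qed.

Lemma ec_ex : 1 < #|K| -> exists Z, [/\ Z != set0, Z != setT & cut Z <= edge_conn K].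
Proof.
move=> K2.
case: (boolP [exists Z : {set K}, (Z != set0) && (Z != setT) && (cut Z <= edge_conn K)])
  => [/existsP[Z /andP[/andP[? ?] ?]]|/existsPn hn]; first by exists Z.
suff : (edge_conn K).+1 <= edge_conn K by rewrite ltnn.
apply: ec_lb K2 _ => Z Z0 ZT.
by have := hn Z; rewrite Z0 ZT /= -ltnNge.
Qed.

Lemma ec_small : #|K| <= 1 -> edge_conn K = 0.
Proof. by rewrite /edge_conn => ->. Qed.

Lemma deg_sum (x : K) : deg x = \sum_y sadj x y.
Proof. by rewrite /deg card_predE. Qed.

Lemma mindeg_le (x : K) : mindeg K <= deg x.
Proof. rewrite /mindeg; case: pickP => [x0 _|//]; exact: bigmin_le. Qed.

Lemma mindeg_ex (x : K) : exists y : K, mindeg K = deg y.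
Proof.
rewrite /mindeg; case: pickP => [x0 _|/(_ x)//].
by case: (bigmin_ex xpredT (@deg K) (deg x0)) => [->|[j _ ->]]; eauto.
Qed.

Lemma cut1 (z : K) : cut [set z] = deg z.
Proof.
rewrite /cut (bigD1 z) //= [X in _ + X]big1 ?addn0; last first.
  by move=> a az; apply: big1 => b _; rewrite inE (negbTE az) andbF.
rewrite deg_sum; apply: eq_bigr => b _; rewrite !inE eqxx andbT.
case e: (sadj z b) => //=; case: eqP => // bz; by rewrite bz sadj_irr in e.
Qed.

Lemma set2_inv (a b x y : K) : a != b -> [set a; b] = [set x; y] ->
  (a = x /\ b = y) \/ (a = y /\ b = x).
Proof.
move=> ab E.
have : a \in [set x; y] by rewrite -E set21.
have : b \in [set x; y] by rewrite -E set22.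
rewrite !inE => /orP[/eqP bx|/eqP be] /orP[/eqP ax|/eqP ae].
- by rewrite ax bx eqxx in ab.
- by right.
- by left.
- by rewrite ae be eqxx in ab.
Qed.

Lemma nedges2 : 2 * nedges K = \sum_(a : K) \sum_(b : K) sadj a b.
Proof.
rewrite pair_bigA -(card_predE (fun p : K * K => sadj p.1 p.2)) -sum1_card.
rewrite (partition_big (fun p : K * K => [set p.1; p.2]) (mem (edges K))) /=; last first.
  move=> [a b]; rewrite inE /= => ab; rewrite inE; apply/existsP; exists a.
  by apply/existsP; exists b; rewrite ab eqxx.
rewrite /nedges mulnC -sum_nat_const; apply: eq_bigr => e.
rewrite inE => /existsP[x /existsP[y /andP[xy /eqP ->]]].
have xny : x != y by apply/eqP => E; rewrite E sadj_irr in xy.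
rewrite sum_nat_cond_const muln1.
have -> : [set p : K * K | (p \in [set p | sadj p.1 p.2]) && ([set p.1; p.2] == [set x; y])]
   = [set (x, y); (y, x)].
  apply/setP => [[a b]]; rewrite !inE /=.
  case ab: (sadj a b) => /=.
    have anb : a != b by apply/eqP => E; rewrite E sadj_irr in ab.
    apply/eqP/idP => [/(set2_inv anb) [[-> ->]|[-> ->]]|]; rewrite ?eqxx ?orbT //.
    by case/orP => /eqP [-> ->] //; rewrite setUC.
  apply/esym/negbTE; apply/negP => /orP[] /eqP [E1 E2]; subst.
    by rewrite xy in ab.
  by rewrite sadj_sym xy in ab.
rewrite cards2; case: eqP => // [[E _]]; by rewrite E eqxx in xny.
Qed.

Definition gs (P Q : {set K}) := \sum_(u : K) \sum_(v : K) (sadj u v && (u \in P) && (v \notin Q)).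

Lemma Mineq (S T : {set K}) : #|S| * mindeg K <= #|S| * #|T| + gs S T.
Proof.
rewrite -!sum_nat_const.
have -> : gs S T = \sum_(u in S) \sum_v (sadj u v && (v \notin T)).
  rewrite /gs [RHS]big_mkcond /=; apply: eq_bigr => u _.
  case uS: (u \in S); last by rewrite /=; apply: big1 => v _; rewrite andbF.
  by apply: eq_bigr => v _; rewrite andbT.
rewrite -big_split /=; apply: leq_sum => u _.
apply: leq_trans (mindeg_le u) _; rewrite deg_sum.
have -> : \sum_v sadj u v = \sum_v (sadj u v && (v \in T)) + \sum_v (sadj u v && (v \notin T)).
  by rewrite -big_split; apply: eq_bigr => v _; case: (sadj u v); case: (v \in T).
rewrite leq_add2r card_sum; apply: leq_sum => v _; by case: (sadj u v); case: (v \in T).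
Qed.

Lemma gsC (P Q : {set K}) : gs (~: P) (~: Q) = gs Q P.
Proof.
rewrite /gs exchange_big; apply: eq_bigr => v _; apply: eq_bigr => u _.
by rewrite !inE negbK sadj_sym; case: (sadj v u); case: (u \in P); case: (v \in Q).
Qed.

Lemma keyH (hK : #|K| < 2 * mindeg K) (P Q : {set K}) u w :
  u \in P -> w \notin P -> mindeg K <= gs P Q + gs Q P.
Proof.
move=> uP wP.
have c1 : 1 <= #|P| by rewrite card_gt0; apply/set0Pn; exists u.
have c2 : 1 <= #|~: P| by rewrite card_gt0; apply/set0Pn; exists w; rewrite inE.
have h3 := Mineq (~: P) (~: Q); have h4 := Mineq (~: Q) (~: P).
rewrite gsC in h3; rewrite gsC in h4.
apply: (arith (p := #|P|) (q := #|Q|) (p' := #|~: P|) (q' := #|~: Q|)) => //.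
- by rewrite cardsC.
- by rewrite !cardsC.
- exact: Mineq.
- exact: Mineq.
Qed.

End Gen.

Lemma sum_cross (I : finType) (T : I -> I -> nat) x0 : T x0 x0 = 0 ->
  \sum_y (T x0 y + T y x0) <= \sum_x \sum_y T x y.
Proof.
move=> h0; rewrite big_split /= [X in _ + X <= _](bigD1 x0) //= h0 add0n.
rewrite [X in _ <= X](bigD1 x0) //= leq_add2l; apply: leq_sum => x _.
by rewrite (bigD1 x0) //= leq_addr.
Qed.

Section Prod.
Variables G H : sgraph.
Local Notation GH := (dprod_graph G H).

Definition Tf (Z : {set GH}) (x y : G) : nat :=
  \sum_(u : H) \sum_(v : H) (sadj x y && sadj u v && ((x, u) \in Z) && ((y, v) \notin Z)).

Lemma cut_prod (Z : {set GH}) : cut Z = \sum_(x : G) \sum_(y : G) Tf Z x y.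
Proof.
rewrite /cut (sum_pair (I := G) (J := H)); apply: eq_bigr => x _.
under eq_bigr => u _ do rewrite (sum_pair (I := G) (J := H)).
rewrite exchange_big; apply: eq_bigr => y _; apply: eq_bigr => u _; apply: eq_bigr => v _.
by [].
Qed.

Lemma cut_prodX (X : {set G}) (Z : {set GH}) :
  (forall x u, ((x, u) \in Z) = (x \in X)) -> cut Z = cut X * (2 * nedges H).
Proof.
move=> hZ; rewrite cut_prod nedges2 /cut big_distrl; apply: eq_bigr => x _.
rewrite big_distrl; apply: eq_bigr => y _; rewrite /Tf big_distrr; apply: eq_bigr => u _.
rewrite big_distrr; apply: eq_bigr => v _; rewrite !hZ.
by case: (sadj x y); case: (sadj u v); case: (x \in X); case: (y \in X).
Qed.

Lemma deg_prod (x : G) (u : H) : deg ((x, u) : GH) = deg x * deg u.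
Proof.
rewrite /deg -cardsX; apply: eq_card => -[y v]; by rewrite !inE.
Qed.

Lemma Hnb (hH : #|H| < 2 * mindeg H) (u : H) : exists v : H, sadj u v.
Proof.
have m0 : 0 < mindeg H by move: hH; case: (mindeg H) => //; rewrite muln0 ltn0.
have : 0 < deg u by apply: leq_trans m0 (mindeg_le u).
rewrite /deg card_gt0 => /set0Pn [v]; rewrite inE; by exists v.
Qed.

Lemma Hvert (hH : #|H| < 2 * mindeg H) : exists u : H, true.
Proof.
have m0 : 0 < mindeg H by move: hH; case: (mindeg H) => //; rewrite muln0 ltn0.
by move: m0; rewrite /mindeg; case: pickP => [u _ _|//]; exists u.
Qed.

Lemma ub1 (hH : #|H| < 2 * mindeg H) (x0 : G) : edge_conn GH <= mindeg G * mindeg H.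
Proof.
have [u0 _] := Hvert hH.
have [x Ex] := mindeg_ex x0; have [u Eu] := mindeg_ex u0.
have [v uv] := Hnb hH u.
have vu : v != u by apply/eqP => E; rewrite E sadj_irr in uv.
rewrite Ex Eu -deg_prod -cut1; apply: ec_ub.
  by apply/set0Pn; exists (x, u); rewrite inE.
by apply/eqP => /setP /(_ (x, v)); rewrite !inE xpair_eqE eqxx (negbTE vu).
Qed.

Lemma ub2 (hH : #|H| < 2 * mindeg H) : 1 < #|G| ->
  edge_conn GH <= 2 * edge_conn G * nedges H.
Proof.
move=> G2; have [u0 _] := Hvert hH.
case: (ec_ex G2) => X [X0 XT hX].
pose Z : {set GH} := [set p : GH | p.1 \in X].
have hZ : forall x u, ((x, u) \in Z) = (x \in X) by move=> x u; rewrite inE.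
apply: leq_trans (@ec_ub _ Z _ _) _.
- by case/set0Pn: X0 => x xX; apply/set0Pn; exists (x, u0); rewrite hZ.
- by case/notT: XT => y yX; apply/eqP => /setP /(_ (y, u0)); rewrite hZ inE (negbTE yX).
rewrite (cut_prodX hZ).
have -> : 2 * edge_conn G * nedges H = edge_conn G * (2 * nedges H) by rewrite mulnCA mulnA.
by rewrite leq_mul2r hX orbT.
Qed.

Lemma lb_main (hH : #|H| < 2 * mindeg H) (Z : {set GH}) : Z != set0 -> Z != setT ->
  minn (2 * edge_conn G * nedges H) (mindeg G * mindeg H) <= cut Z.
Proof.
move=> Z0 ZT.
pose A := fun x : G => [set u : H | (x, u) \in Z].
have TE : forall x y, Tf Z x y = sadj x y * gs (A x) (A y).
  move=> x y; rewrite /Tf /gs big_distrr; apply: eq_bigr => u' _.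
  rewrite big_distrr; apply: eq_bigr => v _; rewrite !inE.
  by case: (sadj x y); case: (sadj u' v); case: ((x, u') \in Z); case: ((y, v) \in Z).
case: (boolP [exists x : G, (A x != set0) && (A x != setT)]).
  case/existsP => x0 /andP[/set0Pn [u uA] /notT [w wA]].
  apply: leq_trans (geq_minr _ _) _.
  apply: leq_trans (leq_mul (mindeg_le x0) (leqnn (mindeg H))) _.
  rewrite cut_prod; apply: leq_trans (sum_cross (T := Tf Z) (x0 := x0) _); last by rewrite TE sadj_irr.
  rewrite deg_sum big_distrl /=; apply: leq_sum => y _.
  rewrite !TE (sadj_sym y x0) -mulnDr leq_mul2l.
  by rewrite (keyH hH (A y) uA wA) orbT.
move/existsPn => hc.
have hc' : forall x, (A x == set0) || (A x == setT).
  by move=> x; have := hc x; rewrite negb_and !negbK.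
pose X := [set x | A x == setT].
have hZ : forall x u, ((x, u) \in Z) = (x \in X).
  move=> x u; rewrite [in RHS]inE.
  case/orP: (hc' x) => /eqP E.
    have : u \notin A x by rewrite E inE.
    rewrite inE => /negbTE ->; apply/esym/negbTE/eqP => E'.
    by move: E'; rewrite E => /setP /(_ u); rewrite !inE.
  have : u \in A x by rewrite E inE.
  by rewrite inE => ->; rewrite E eqxx.
have X0 : X != set0.
  by case/set0Pn: Z0 => [[x1 u1] Z1]; apply/set0Pn; exists x1; rewrite -(hZ x1 u1).
have XT : X != setT.
  by case/notT: ZT => [[x2 u2] nZ]; apply/eqP => XT; rewrite hZ XT inE in nZ.
apply: leq_trans (geq_minl _ _) _.
rewrite (cut_prodX hZ).
have -> : 2 * edge_conn G * nedges H = edge_conn G * (2 * nedges H) by rewrite mulnCA mulnA.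
by rewrite leq_mul2r (ec_ub X0 XT) orbT.
Qed.

End Prod.

Theorem theorem1 (H : sgraph) (hH : #|H| < 2 * mindeg H) (G : sgraph) :
  edge_conn (dprod_graph G H) = minn (2 * edge_conn G * nedges H) (mindeg G * mindeg H).
Proof.
have [u0 _] := Hvert hH; have [v0 uv0] := Hnb hH u0.
have cGH : #|dprod_graph G H| = #|G| * #|H| by exact: card_prod.
case: (posnP #|G|) => [G0|Gpos].
  have -> : mindeg G = 0.
    by rewrite /mindeg; case: pickP => // x; have := card0_eq G0 x; rewrite !inE.
  by rewrite minn0 ec_small // cGH G0.
case/card_gt0P: Gpos => x0 _.
apply/eqP; rewrite eqn_leq; apply/andP; split.
  rewrite leq_min ub1 // andbT.
  case: (ltnP 1 #|G|) => [G2|G1]; first exact: ub2.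
  apply: leq_trans (ub1 hH x0) _.
  have -> : mindeg G = 0; last by rewrite mul0n.
  apply/eqP; rewrite -leqn0; apply: leq_trans (mindeg_le x0) _.
  rewrite leqn0 /deg cards_eq0; apply/eqP/setP => y; rewrite !inE.
  case: (eqVneq y x0) => [->|yx]; first by rewrite sadj_irr.
  have : 1 < #|G| by apply/card_gt1P; exists y, x0.
  by rewrite ltnNge G1.
apply: ec_lb.
  apply/card_gt1P; exists (x0, u0), (x0, v0); split => //.
  rewrite xpair_eqE eqxx /=; apply/eqP => E; by rewrite E sadj_irr in uv0.
move=> Z Z0 ZT; exact: lb_main.
Qed.
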